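(* In the setting below, let $z_0=(u_0,v_0)$ be a singular point of $P$ with $k_1\neq0$. Then the determinant of the Hessian $H(z_0)$ of $\hat R$ with respect to the variables $(\theta_1',r_2',\theta_2')$ at $z_0$ is $$\det H(z_0)=-\frac{4(p-1)(q-1)|\mu|^2}{k_1^2\cos\Theta_2}\,\phi(z_0),\qquad \phi(z_0)=(-1)^\kappa(p-1)|v_0|\sin\Theta_3+(q-1)|\mu||u_0|\sin\Theta_1.$$
   Context: Fix integers $p,q\ge2$ and $\mu\in\mathbb{C}\setminus\{0\}$. Let $P(u,v;\mu)=\mu(u^p+\bar u)+v^q+\bar v$, regarded as a smooth map $\mathbb{R}^4\to\mathbb{R}^2$, with $Q=\operatorname{Re}P$, $R=\operatorname{Im}P$. A singular point is a point where the real differential of $P$ has rank $<2$; every singular point $z_0=(u_0,v_0)$ satisfies $u_0v_0\ne0$. Use polar coordinates $r_1=|u|,\theta_1=\arg u,r_2=|v|,\theta_2=\arg v$ near $z_0$. Fix real representatives $\arg u_0,\arg v_0,\arg\mu$ and an integer $\kappa$ with $\frac{p-1}{2}\arg u_0+\arg\mu=\frac{q-1}{2}\arg v_0+\kappa\pi$. Set $\Theta_1=\frac{p+1}{2}\arg u_0$, $\Theta_2=\frac{p-1}{2}\arg u_0+\arg\mu$, $\Theta_3=\frac{q+1}{2}\arg v_0$, $\Theta_4=\frac{q-1}{2}\arg v_0$, and $(k_1,k_2,k_3,k_4)=(\partial_{r_1}Q,\partial_{\theta_1}Q,\partial_{r_2}Q,\partial_{\theta_2}Q)(z_0)$. When $k_1\ne0$,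 define new coordinates $(r_1',\theta_1',r_2',\theta_2')=(k_1r_1+k_2\theta_1+k_3r_2+k_4\theta_2,\theta_1,r_2,\theta_2)$ near $z_0$, let $s=\frac{\partial R}{\partial r_1'}(z_0)$ and $\hat R=R-sQ$. *)

(* Defs.v *)
From Stdlib Require Import Reals ZArith ClassicalEpsilon ClassicalDescription.
Open Scope R_scope.

(** Derivative of a real function of one real variable at x:
    the (unique) l with derivable_pt_lim f x l, or 0 if f is not
    differentiable at x. *)
Definition Deriv (f : R -> R) (x : R) : R :=
  match excluded_middle_informative (exists l, derivable_pt_lim f x l) with
  | left H => proj1_sig (constructive_indefinite_description _ H)
  | right _ => 0
  end.

Definition fun4 := R -> R -> R -> R -> R.

Definition pd (k : nat) (f : fun4) : fun4 := fun a b c d =>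
  match k with
  | 1%nat => Deriv (fun t => f t b c d) a
  | 2%nat => Deriv (fun t => f a t c d) b
  | 3%nat => Deriv (fun t => f a b t d) c
  | 4%nat => Deriv (fun t => f a b c t) d
  | _ => 0
  end.

Definition Cx := (R * R)%type.
Definition Cadd (z w : Cx) : Cx := (fst z + fst w, snd z + snd w).
Definition Cmul (z w : Cx) : Cx :=
  (fst z * fst w - snd z * snd w, fst z * snd w + snd z * fst w).
Definition Cconj (z : Cx) : Cx := (fst z, - snd z).
Fixpoint Cpow (z : Cx) (n : nat) : Cx :=
  match n with O => (1, 0) | S n => Cmul z (Cpow z n) end.
Definition Cnorm (z : Cx) : R := sqrt (fst z ^ 2 + snd z ^ 2).
Definition Cpolar (r t : R) : Cx := (r * cos t, r * sin t).

Definition Pmap (p q : nat) (mu u v : Cx) : Cx :=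
  Cadd (Cmul mu (Cadd (Cpow u p) (Cconj u))) (Cadd (Cpow v q) (Cconj v)).

Definition Qcart (p q : nat) (mu : Cx) : fun4 :=
  fun x1 y1 x2 y2 => fst (Pmap p q mu (x1, y1) (x2, y2)).
Definition Rcart (p q : nat) (mu : Cx) : fun4 :=
  fun x1 y1 x2 y2 => snd (Pmap p q mu (x1, y1) (x2, y2)).

(** z0 = (u0,v0) is a singular point: the real 2x4 Jacobian of (Q,R) at z0
    has rank < 2, i.e. its two rows are linearly dependent. *)
Definition singular_point (p q : nat) (mu u0 v0 : Cx) : Prop :=
  exists a b : R, (a <> 0 \/ b <> 0) /\
    forall k : nat, (1 <= k <= 4)%nat ->
      a * pd k (Qcart p q mu) (fst u0) (snd u0) (fst v0) (snd v0)
      + b * pd k (Rcart p q mu) (fst u0) (snd u0) (fst v0) (snd v0) = 0.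

Definition Qpol (p q : nat) (mu : Cx) : fun4 := fun r1 t1 r2 t2 =>
  Qcart p q mu (r1 * cos t1) (r1 * sin t1) (r2 * cos t2) (r2 * sin t2).
Definition Rpol (p q : nat) (mu : Cx) : fun4 := fun r1 t1 r2 t2 =>
  Rcart p q mu (r1 * cos t1) (r1 * sin t1) (r2 * cos t2) (r2 * sin t2).

(** A function f of (r1,theta1,r2,theta2) expressed in the new coordinates
    (r1',theta1',r2',theta2') = (k1 r1 + k2 theta1 + k3 r2 + k4 theta2,
    theta1, r2, theta2)  (k1 <> 0). *)
Definition newcoords (k1 k2 k3 k4 : R) (f : fun4) : fun4 :=
  fun r1' t1' r2' t2' => f ((r1' - k2 * t1' - k3 * r2' - k4 * t2') / k1) t1' r2' t2'.

(** Hessian of f with respect to variables 2,3,4 (indices 0,1,2) at a point. *)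
Definition hess234 (f : fun4) (a b c d : R) (i j : nat) : R :=
  pd (i + 2) (pd (j + 2) f) a b c d.

Definition det3 (M : nat -> nat -> R) : R :=
  M 0%nat 0%nat * (M 1%nat 1%nat * M 2%nat 2%nat - M 1%nat 2%nat * M 2%nat 1%nat)
  - M 0%nat 1%nat * (M 1%nat 0%nat * M 2%nat 2%nat - M 1%nat 2%nat * M 2%nat 0%nat)
  + M 0%nat 2%nat * (M 1%nat 0%nat * M 2%nat 1%nat - M 1%nat 1%nat * M 2%nat 0%nat).

(* Main.v *)
Require Import Defs.
From Stdlib Require Import Reals ZArith Lra Lia ClassicalEpsilon ClassicalDescription FunctionalExtensionality.
From Coquelicot Require Import Hierarchy Derive AutoDerive.
Open Scope R_scope.

Lemma Deriv_is f x l : is_derive f x l -> Deriv f x = l.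
Proof. intro H. apply is_derive_Reals in H. unfold Deriv.
destruct excluded_middle_informative as [e|n].
- destruct constructive_indefinite_description as [l' Hl']. simpl. eapply uniqueness_limite; eauto.
- exfalso; apply n; eauto. Qed.

Lemma Deriv_ext f g x : (forall t, f t = g t) -> Deriv f x = Deriv g x.
Proof. intro H. replace f with g; auto. apply functional_extensionality; auto. Qed.

Lemma Cpow_polar r t n : Cpow (r*cos t, r*sin t) n = (r^n*cos(INR n*t), r^n*sin(INR n*t)).
Proof.
induction n as [|n IH]. - simpl. rewrite Rmult_0_l, cos_0, sin_0. f_equal; ring.
- simpl Cpow. rewrite IH. unfold Cmul. simpl fst; simpl snd. rewrite S_INR.
  replace ((INR n + 1) * t) with (t + INR n * t) by ring. rewrite cos_plus, sin_plus.
  cbn [pow]; f_equal; ring.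
Qed.

Lemma lin2 f g x df dg A B C D : is_derive f x df -> is_derive g x dg ->
  is_derive (fun t => A*f t + B*g t + C*t + D) x (A*df + B*dg + C).
Proof. intros Hf Hg. auto_derive.
- split; [exists df; exact Hf|split;[exists dg; exact Hg| auto]].
- change (Derive (fun y => f y) x) with (Derive f x).
  change (Derive (fun y => g y) x) with (Derive g x).
  rewrite (is_derive_unique _ _ _ Hf), (is_derive_unique _ _ _ Hg). ring. Qed.

Lemma mul2 f g x df dg B : is_derive f x df -> is_derive g x dg ->
  is_derive (fun t => t*f t + B*g t) x (f x + x*df + B*dg).
Proof. intros Hf Hg. auto_derive.
- split; [exists df; exact Hf|split;[exists dg; exact Hg| auto]].
- change (Derive (fun y => f y) x) with (Derive f x).
  change (Derive (fun y => g y) x) with (Derive g x).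
  rewrite (is_derive_unique _ _ _ Hf), (is_derive_unique _ _ _ Hg). ring. Qed.

Lemma Cpow_dx (y : R) (n : nat) (x : R) :
  is_derive (fun t => fst (Cpow (t,y) n)) x (INR n * fst (Cpow (x,y) (pred n))) /\
  is_derive (fun t => snd (Cpow (t,y) n)) x (INR n * snd (Cpow (x,y) (pred n))).
Proof.
induction n as [|n [IH1 IH2]].
- simpl. split; apply is_derive_Reals; rewrite Rmult_0_l; apply derivable_pt_lim_const.
- simpl Cpow. unfold Cmul. simpl fst; simpl snd. rewrite S_INR. split.
  + pose proof (mul2 _ _ x _ _ (-y) IH1 IH2) as H.
    replace ((INR n + 1) * fst (Cpow (x, y) n)) with (fst (Cpow (x, y) n) + x * (INR n * fst (Cpow (x, y) (Init.Nat.pred n))) + - y * (INR n * snd (Cpow (x, y) (Init.Nat.pred n)))).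
    eapply is_derive_ext; [| exact H]. intro t; simpl. ring.
    destruct n. simpl. ring. simpl Cpow. unfold Cmul. simpl. ring.
  + pose proof (mul2 _ _ x _ _ y IH2 IH1) as H.
    replace ((INR n + 1) * snd (Cpow (x, y) n)) with (snd (Cpow (x, y) n) + x * (INR n * snd (Cpow (x, y) (Init.Nat.pred n))) + y * (INR n * fst (Cpow (x, y) (Init.Nat.pred n)))).
    eapply is_derive_ext; [| exact H]. intro t; simpl. ring.
    destruct n. simpl. ring. simpl Cpow. unfold Cmul. simpl. ring.
Qed.

Lemma mulg f g x df dg A B : is_derive f x df -> is_derive g x dg ->
  is_derive (fun t => A*f t + B*(t*g t)) x (A*df + B*(g x + x*dg)).
Proof. intros Hf Hg. auto_derive.
- split; [exists df; exact Hf|split;[exists dg; exact Hg| auto]].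
- change (Derive (fun y => f y) x) with (Derive f x).
  change (Derive (fun y => g y) x) with (Derive g x).
  rewrite (is_derive_unique _ _ _ Hf), (is_derive_unique _ _ _ Hg). ring. Qed.

Lemma Cpow_dy (x : R) (n : nat) (y : R) :
  is_derive (fun t => fst (Cpow (x,t) n)) y (- INR n * snd (Cpow (x,y) (pred n))) /\
  is_derive (fun t => snd (Cpow (x,t) n)) y (INR n * fst (Cpow (x,y) (pred n))).
Proof.
induction n as [|n [IH1 IH2]].
- simpl. split; apply is_derive_Reals; rewrite ?Ropp_0, Rmult_0_l; apply derivable_pt_lim_const.
- simpl Cpow. unfold Cmul. simpl fst; simpl snd. rewrite S_INR. split.
  + pose proof (mulg _ _ y _ _ x (-1) IH1 IH2) as H.
    replace (- (INR n + 1) * snd (Cpow (x, y) n)) with (x * (- INR n * snd (Cpow (x, y) (Init.Nat.pred n))) + -1 * (snd (Cpow (x, y) n) + y * (INR n * fst (Cpow (x, y) (Init.Nat.pred n))))).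
    eapply is_derive_ext; [| exact H]. intro t; simpl. ring.
    destruct n. simpl. ring. simpl Cpow. unfold Cmul. simpl. ring.
  + pose proof (mulg _ _ y _ _ x 1 IH2 IH1) as H.
    replace ((INR n + 1) * fst (Cpow (x, y) n)) with (x * (INR n * fst (Cpow (x, y) (Init.Nat.pred n))) + 1 * (fst (Cpow (x, y) n) + y * (- INR n * snd (Cpow (x, y) (Init.Nat.pred n))))).
    eapply is_derive_ext; [| exact H]. intro t; simpl. ring.
    destruct n. simpl. ring. simpl Cpow. unfold Cmul. simpl. ring.
Qed.

Ltac cart A B C D H1 H2 := unfold pd; cbv beta iota; apply Deriv_is;
  eapply is_derive_ext; [|exact (lin2 _ _ _ _ _ A B C D H1 H2)];
  intro t; unfold Qcart, Rcart, Pmap, Cadd, Cmul, Cconj; simpl; ring.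

Section Cart.
Variables (p q : nat) (mu : Cx) (x1 y1 x2 y2 : R).
Let Uf := fst (Cpow (x1,y1) (pred p)).
Let Us := snd (Cpow (x1,y1) (pred p)).
Let Vf := fst (Cpow (x2,y2) (pred q)).
Let Vs := snd (Cpow (x2,y2) (pred q)).

Lemma Qx1 : pd 1 (Qcart p q mu) x1 y1 x2 y2 =
  fst mu * (INR p * Uf) + - snd mu * (INR p * Us) + fst mu.
Proof. destruct (Cpow_dx y1 p x1) as [H1 H2].
cart (fst mu) (- snd mu) (fst mu) (snd mu * y1 + fst (Cpow (x2,y2) q) + x2) H1 H2. Qed.
Lemma Rx1 : pd 1 (Rcart p q mu) x1 y1 x2 y2 =
  snd mu * (INR p * Uf) + fst mu * (INR p * Us) + snd mu.
Proof. destruct (Cpow_dx y1 p x1) as [H1 H2].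
cart (snd mu) (fst mu) (snd mu) (- fst mu * y1 + snd (Cpow (x2,y2) q) - y2) H1 H2. Qed.
Lemma Qy1 : pd 2 (Qcart p q mu) x1 y1 x2 y2 =
  fst mu * (- INR p * Us) + - snd mu * (INR p * Uf) + snd mu.
Proof. destruct (Cpow_dy x1 p y1) as [H1 H2].
cart (fst mu) (- snd mu) (snd mu) (fst mu * x1 + fst (Cpow (x2,y2) q) + x2) H1 H2. Qed.
Lemma Ry1 : pd 2 (Rcart p q mu) x1 y1 x2 y2 =
  snd mu * (- INR p * Us) + fst mu * (INR p * Uf) + - fst mu.
Proof. destruct (Cpow_dy x1 p y1) as [H1 H2].
cart (snd mu) (fst mu) (- fst mu) (snd mu * x1 + snd (Cpow (x2,y2) q) - y2) H1 H2. Qed.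
Lemma Qx2 : pd 3 (Qcart p q mu) x1 y1 x2 y2 =
  1 * (INR q * Vf) + 0 * (INR q * Vs) + 1.
Proof. destruct (Cpow_dx y2 q x2) as [H1 H2].
cart 1 0 1 (fst (Cmul mu (Cadd (Cpow (x1,y1) p) (Cconj (x1,y1))))) H1 H2. Qed.
Lemma Rx2 : pd 3 (Rcart p q mu) x1 y1 x2 y2 =
  0 * (INR q * Vf) + 1 * (INR q * Vs) + 0.
Proof. destruct (Cpow_dx y2 q x2) as [H1 H2].
cart 0 1 0 (snd (Cmul mu (Cadd (Cpow (x1,y1) p) (Cconj (x1,y1)))) - y2) H1 H2. Qed.
Lemma Qy2 : pd 4 (Qcart p q mu) x1 y1 x2 y2 =
  1 * (- INR q * Vs) + 0 * (INR q * Vf) + 0.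
Proof. destruct (Cpow_dy x2 q y2) as [H1 H2].
cart 1 0 0 (fst (Cmul mu (Cadd (Cpow (x1,y1) p) (Cconj (x1,y1)))) + x2) H1 H2. Qed.
Lemma Ry2 : pd 4 (Rcart p q mu) x1 y1 x2 y2 =
  0 * (- INR q * Vs) + 1 * (INR q * Vf) + -1.
Proof. destruct (Cpow_dy x2 q y2) as [H1 H2].
cart 0 1 (-1) (snd (Cmul mu (Cadd (Cpow (x1,y1) p) (Cconj (x1,y1))))) H1 H2. Qed.
End Cart.

Lemma sing_uv p q mu u0 v0 : singular_point p q mu u0 v0 ->
  let U := Cpow u0 (pred p) in let V := Cpow v0 (pred q) in
  (INR p)^2 * ((fst U)^2 + (snd U)^2) * ((fst mu)^2 + (snd mu)^2) = (fst mu)^2 + (snd mu)^2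
  /\ (INR q)^2 * ((fst V)^2 + (snd V)^2) = 1.
Proof.
intros [a [b [Hab H]]] U V.
pose proof (H 1%nat ltac:(lia)) as H1. pose proof (H 2%nat ltac:(lia)) as H2.
pose proof (H 3%nat ltac:(lia)) as H3. pose proof (H 4%nat ltac:(lia)) as H4.
rewrite Qx1, Rx1 in H1. rewrite Qy1, Ry1 in H2. rewrite Qx2, Rx2 in H3. rewrite Qy2, Ry2 in H4.
destruct u0 as [x1 y1]. destruct v0 as [x2 y2]. simpl fst in *; simpl snd in *.
fold U in H1, H2. fold V in H3, H4.
destruct U as [uf us]. destruct V as [vf vs]. destruct mu as [mx my]. simpl in *.
set (P := INR p) in *. set (Q := INR q) in *.
split.
- set (al := P*(mx*uf - my*us)). set (be := P*(mx*us+my*uf)).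
  set (D := al^2 - mx^2 + be^2 - my^2).
  assert (HD : D = 0).
  { destruct Hab as [Ha|Hb].
    - apply (Rmult_eq_reg_l a); [|exact Ha]. rewrite Rmult_0_r.
      replace (a*D) with ((al - mx)*(a * (mx * (P * uf) + - my * (P * us) + mx) + b * (my * (P * uf) + mx * (P * us) + my))
         - (be + my) * (a * (mx * (- P * us) + - my * (P * uf) + my) + b * (my * (- P * us) + mx * (P * uf) + - mx))) by (unfold D, al, be; ring).
      rewrite H1, H2. ring.
    - apply (Rmult_eq_reg_l b); [|exact Hb]. rewrite Rmult_0_r.
      replace (b*D) with ((al + mx)*(a * (mx * (- P * us) + - my * (P * uf) + my) + b * (my * (- P * us) + mx * (P * uf) + - mx))
         - (- be + my) * (a * (mx * (P * uf) + - my * (P * us) + mx) + b * (my * (P * uf) + mx * (P * us) + my))) by (unfold D, al, be; ring).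
      rewrite H1, H2. ring. }
  unfold D, al, be in HD. nra.
- set (al := Q*vf). set (be := Q*vs).
  set (D := al^2 - 1 + be^2).
  assert (HD : D = 0).
  { destruct Hab as [Ha|Hb].
    - apply (Rmult_eq_reg_l a); [|exact Ha]. rewrite Rmult_0_r.
      replace (a*D) with ((al - 1)*(a * (1 * (Q * vf) + 0 * (Q * vs) + 1) + b * (0 * (Q * vf) + 1 * (Q * vs) + 0))
         - (be) * (a * (1 * (- Q * vs) + 0 * (Q * vf) + 0) + b * (0 * (- Q * vs) + 1 * (Q * vf) + -1))) by (unfold D, al, be; ring).
      rewrite H3, H4. ring.
    - apply (Rmult_eq_reg_l b); [|exact Hb]. rewrite Rmult_0_r.
      replace (b*D) with ((al + 1)*(a * (1 * (- Q * vs) + 0 * (Q * vf) + 0) + b * (0 * (- Q * vs) + 1 * (Q * vf) + -1))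
         - (- be) * (a * (1 * (Q * vf) + 0 * (Q * vs) + 1) + b * (0 * (Q * vf) + 1 * (Q * vs) + 0))) by (unfold D, al, be; ring).
      rewrite H3, H4. ring. }
  unfold D, al, be in HD. nra.
Qed.

Lemma cs1 x : cos x ^ 2 + sin x ^ 2 = 1.
Proof. pose proof (sin2_cos2 x). unfold Rsqr in H. nra. Qed.
Lemma cs_nat n x : cos (x + INR n * PI) = (-1)^n * cos x /\ sin (x + INR n * PI) = (-1)^n * sin x.
Proof. induction n as [|n [IH1 IH2]].
- simpl. rewrite Rmult_0_l, Rplus_0_r. split; ring.
- rewrite S_INR. replace (x + (INR n + 1) * PI) with ((x + INR n * PI) + PI) by ring.
  rewrite neg_cos, neg_sin, IH1, IH2. simpl. split; ring. Qed.
Lemma cs_Z k x : cos (x + IZR k * PI) = powerRZ (-1) k * cos x /\ sin (x + IZR k * PI) = powerRZ (-1) k * sin x.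
Proof. destruct k as [|p|p].
- simpl. rewrite Rmult_0_l, Rplus_0_r. split; ring.
- replace (IZR (Z.pos p)) with (INR (Pos.to_nat p)) by (rewrite INR_IZR_INZ, positive_nat_Z; reflexivity). simpl powerRZ. apply cs_nat.
- replace (IZR (Z.neg p)) with (- INR (Pos.to_nat p)) by (rewrite INR_IZR_INZ, positive_nat_Z, <- opp_IZR; reflexivity). simpl powerRZ.
  set (n := Pos.to_nat p). destruct (cs_nat n (x - INR n * PI)) as [H1 H2].
  replace (x - INR n * PI + INR n * PI) with x in H1, H2 by ring.
  assert (Hn : (-1)^n <> 0) by (apply pow_nonzero; lra).
  replace (x + - INR n * PI) with (x - INR n * PI) by ring.
  rewrite H1, H2. split; field; auto. Qed.

Section NC.
Variables (m a : R) (p q : nat) (k1 k2 k3 k4 s : R).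

Definition Qf : fun4 := fun r1 t1 r2 t2 =>
  m*r1^p*cos(INR p*t1+a) + m*r1*cos(a-t1) + r2^q*cos(INR q*t2) + r2*cos t2.
Definition Rf : fun4 := fun r1 t1 r2 t2 =>
  m*r1^p*sin(INR p*t1+a) + m*r1*sin(a-t1) + r2^q*sin(INR q*t2) - r2*sin t2.

Definition Q1f : fun4 := fun x1 x2 x3 x4 => m*(INR p * x1^(pred p))*cos(INR p*x2+a) + m*cos(a-x2).
Definition R1f : fun4 := fun x1 x2 x3 x4 => m*(INR p * x1^(pred p))*sin(INR p*x2+a) + m*sin(a-x2).
Definition Q2f : fun4 := fun x1 x2 x3 x4 => - m*x1^p*INR p*sin(INR p*x2+a) + m*x1*sin(a-x2).
Definition R2f : fun4 := fun x1 x2 x3 x4 => m*x1^p*INR p*cos(INR p*x2+a) - m*x1*cos(a-x2).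
Definition Q3f : fun4 := fun x1 x2 x3 x4 => INR q*x3^(pred q)*cos(INR q*x4) + cos x4.
Definition R3f : fun4 := fun x1 x2 x3 x4 => INR q*x3^(pred q)*sin(INR q*x4) - sin x4.
Definition Q4f : fun4 := fun x1 x2 x3 x4 => - x3^q*INR q*sin(INR q*x4) - x3*sin x4.
Definition R4f : fun4 := fun x1 x2 x3 x4 => x3^q*INR q*cos(INR q*x4) - x3*cos x4.

Definition Q11f : fun4 := fun x1 x2 x3 x4 => m*INR p*INR (pred p)*x1^(pred (pred p))*cos(INR p*x2+a).
Definition R11f : fun4 := fun x1 x2 x3 x4 => m*INR p*INR (pred p)*x1^(pred (pred p))*sin(INR p*x2+a).
Definition Q12f : fun4 := fun x1 x2 x3 x4 => - m*INR p*x1^(pred p)*INR p*sin(INR p*x2+a) + m*sin(a-x2).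
Definition R12f : fun4 := fun x1 x2 x3 x4 => m*INR p*x1^(pred p)*INR p*cos(INR p*x2+a) - m*cos(a-x2).
Definition Q22f : fun4 := fun x1 x2 x3 x4 => - m*x1^p*INR p*INR p*cos(INR p*x2+a) - m*x1*cos(a-x2).
Definition R22f : fun4 := fun x1 x2 x3 x4 => - m*x1^p*INR p*INR p*sin(INR p*x2+a) - m*x1*sin(a-x2).
Definition Q33f : fun4 := fun x1 x2 x3 x4 => INR q*INR (pred q)*x3^(pred (pred q))*cos(INR q*x4).
Definition R33f : fun4 := fun x1 x2 x3 x4 => INR q*INR (pred q)*x3^(pred (pred q))*sin(INR q*x4).
Definition Q34f : fun4 := fun x1 x2 x3 x4 => - INR q*x3^(pred q)*INR q*sin(INR q*x4) - sin x4.
Definition R34f : fun4 := fun x1 x2 x3 x4 => INR q*x3^(pred q)*INR q*cos(INR q*x4) - cos x4.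
Definition Q44f : fun4 := fun x1 x2 x3 x4 => - x3^q*INR q*INR q*cos(INR q*x4) - x3*cos x4.
Definition R44f : fun4 := fun x1 x2 x3 x4 => - x3^q*INR q*INR q*sin(INR q*x4) + x3*sin x4.

Definition Rhat' : fun4 := fun w b c d =>
  newcoords k1 k2 k3 k4 Rf w b c d - s * newcoords k1 k2 k3 k4 Qf w b c d.
Definition Lf (w b c d : R) := (w - k2*b - k3*c - k4*d)/k1.
Definition G (Rk Qk : fun4) : fun4 := fun x1 x2 x3 x4 => Rk x1 x2 x3 x4 - s * Qk x1 x2 x3 x4.

Ltac fin := unfold G, Lf, Q1f, R1f, Q2f, R2f, Q3f, R3f, Q4f, R4f,
  Q11f, R11f, Q12f, R12f, Q22f, R22f, Q33f, R33f, Q34f, R34f, Q44f, R44f, Rminus, Rdiv; ring.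

Lemma D1R w b c d : pd 1 (newcoords k1 k2 k3 k4 Rf) w b c d = / k1 * R1f (Lf w b c d) b c d.
Proof. unfold pd; cbv beta iota. apply Deriv_is. unfold newcoords, Rf. auto_derive; [auto|fin]. Qed.

Lemma D2 w b c d : pd 2 Rhat' w b c d =
  G R2f Q2f (Lf w b c d) b c d - k2/k1 * G R1f Q1f (Lf w b c d) b c d.
Proof. unfold pd; cbv beta iota. apply Deriv_is. unfold Rhat', newcoords, Rf, Qf. auto_derive; [auto|fin]. Qed.
Lemma D3 w b c d : pd 3 Rhat' w b c d =
  G R3f Q3f (Lf w b c d) b c d - k3/k1 * G R1f Q1f (Lf w b c d) b c d.
Proof. unfold pd; cbv beta iota. apply Deriv_is. unfold Rhat', newcoords, Rf, Qf. auto_derive; [auto|fin]. Qed.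
Lemma D4 w b c d : pd 4 Rhat' w b c d =
  G R4f Q4f (Lf w b c d) b c d - k4/k1 * G R1f Q1f (Lf w b c d) b c d.
Proof. unfold pd; cbv beta iota. apply Deriv_is. unfold Rhat', newcoords, Rf, Qf. auto_derive; [auto|fin]. Qed.

End NC.

Section H2.
Variables (m a : R) (p q : nat) (k1 k2 k3 k4 s w0 r1 t1 r2 t2 : R).
Hypothesis HL : (w0 + - (k2 * t1) + - (k3 * r2) + - (k4 * t2)) * / k1 = r1.
Let g11 := G s (R11f m a p) (Q11f m a p) r1 t1 r2 t2.
Let g12 := G s (R12f m a p) (Q12f m a p) r1 t1 r2 t2.
Let g22 := G s (R22f m a p) (Q22f m a p) r1 t1 r2 t2.
Let g33 := G s (R33f q) (Q33f q) r1 t1 r2 t2.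
Let g34 := G s (R34f q) (Q34f q) r1 t1 r2 t2.
Let g44 := G s (R44f q) (Q44f q) r1 t1 r2 t2.
Let al := k2/k1. Let be := k3/k1. Let ga := k4/k1.
Let Rh := Rhat' m a p q k1 k2 k3 k4 s.

Ltac repL := repeat match goal with |- context [ ((?w + - (?a*?b) + - (?c*?d) + - (?e*?f)) * / ?k) ] =>
  replace ((w + - (a*b) + - (c*d) + - (e*f)) * / k) with r1 by (exact (eq_sym HL)) end.
Ltac sec Dj := unfold hess234; cbn [Nat.add]; unfold pd at 1; cbv beta iota;
  erewrite Deriv_ext; [|intro; apply Dj]; apply Deriv_is;
  unfold G, Lf, Q1f, R1f, Q2f, R2f, Q3f, R3f, Q4f, R4f; auto_derive; [auto|];
  unfold g11, g12, g22, g33, g34, g44, al, be, ga, G,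
  Q11f, R11f, Q12f, R12f, Q22f, R22f, Q33f, R33f, Q34f, R34f, Q44f, R44f, Rminus, Rdiv; repL; ring.

Lemma H00 : hess234 Rh w0 t1 r2 t2 0 0 = g22 - 2*al*g12 + al^2*g11.
Proof. sec D2. Qed.
Lemma H01 : hess234 Rh w0 t1 r2 t2 0 1 = - be*(g12 - al*g11).
Proof. unfold hess234; cbn [Nat.add]; unfold pd at 1; cbv beta iota;
  erewrite Deriv_ext; [|intro; apply D3]; apply Deriv_is;
  unfold G, Lf, Q1f, R1f, Q2f, R2f, Q3f, R3f, Q4f, R4f; auto_derive; [auto|]. 
  match goal with |- ?x = ?y => change (@eq R x y) end.
  repL; unfold g11, g12, g22, g33, g34, g44, al, be, ga, G,
  Q11f, R11f, Q12f, R12f, Q22f, R22f, Q33f, R33f, Q34f, R34f, Q44f, R44f, Rminus, Rdiv. ring.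
Qed.
Lemma H02 : hess234 Rh w0 t1 r2 t2 0 2 = - ga*(g12 - al*g11).
Proof. sec D4. Qed.
Lemma H10 : hess234 Rh w0 t1 r2 t2 1 0 = - be*(g12 - al*g11).
Proof. sec D2. Qed.
Lemma H11 : hess234 Rh w0 t1 r2 t2 1 1 = g33 + be^2*g11.
Proof. sec D3. Qed.
Lemma H12 : hess234 Rh w0 t1 r2 t2 1 2 = g34 + be*ga*g11.
Proof. sec D4. Qed.
Lemma H20 : hess234 Rh w0 t1 r2 t2 2 0 = - ga*(g12 - al*g11).
Proof. sec D2. Qed.
Lemma H21 : hess234 Rh w0 t1 r2 t2 2 1 = g34 + be*ga*g11.
Proof. sec D3. Qed.
Lemma H22 : hess234 Rh w0 t1 r2 t2 2 2 = g44 + ga^2*g11.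
Proof. sec D4. Qed.
End H2.


Lemma polar_norm r t n : fst (Cpow (Cpolar r t) n) ^2 + snd (Cpow (Cpolar r t) n)^2 = (r^n)^2.
Proof. unfold Cpolar. rewrite Cpow_polar. cbn [fst snd]. pose proof (cs1 (INR n * t)). nra. Qed.
Lemma polar_norm0 r t : fst (Cpolar r t) ^2 + snd (Cpolar r t)^2 = r^2.
Proof. unfold Cpolar. cbn [fst snd]. pose proof (cs1 t). nra. Qed.
Lemma pow_pred r n : (1 <= n)%nat -> r^n = r * r^(pred n).
Proof. intro H. destruct n; [lia|reflexivity]. Qed.
Lemma INR_pred n : (1 <= n)%nat -> INR (pred n) = INR n - 1.
Proof. intro H. destruct n; [lia|]. simpl pred. rewrite S_INR. ring. Qed.

Lemma Qpol_eq p q m a : Qpol p q (Cpolar m a) = Qf m a p q.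
Proof.
apply functional_extensionality; intro r1. apply functional_extensionality; intro t1.
apply functional_extensionality; intro r2. apply functional_extensionality; intro t2.
unfold Qpol, Qcart, Pmap, Qf, Cpolar, Cadd, Cmul, Cconj. rewrite !Cpow_polar. cbn [fst snd].
rewrite cos_plus, cos_minus. ring.
Qed.
Lemma Rpol_eq p q m a : Rpol p q (Cpolar m a) = Rf m a p q.
Proof.
apply functional_extensionality; intro r1. apply functional_extensionality; intro t1.
apply functional_extensionality; intro r2. apply functional_extensionality; intro t2.
unfold Rpol, Rcart, Pmap, Rf, Cpolar, Cadd, Cmul, Cconj. rewrite !Cpow_polar. cbn [fst snd].
rewrite sin_plus, sin_minus. ring.
Qed.

Theorem proposition3p9 (p q : nat) (mu u0 v0 : Cx) (argu0 argv0 argmu : R)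
  (kappa : Z)
  (hp : (2 <= p)%nat) (hq : (2 <= q)%nat) (hmu : mu <> (0, 0))
  (hsing : singular_point p q mu u0 v0)
  (hargu0 : u0 = Cpolar (Cnorm u0) argu0)
  (hargv0 : v0 = Cpolar (Cnorm v0) argv0)
  (hargmu : mu = Cpolar (Cnorm mu) argmu)
  (hkappa : (INR p - 1) / 2 * argu0 + argmu
            = (INR q - 1) / 2 * argv0 + IZR kappa * PI) :
  let r10 := Cnorm u0 in
  let r20 := Cnorm v0 in
  let Qp := Qpol p q mu in
  let Rp := Rpol p q mu in
  let k1 := pd 1 Qp r10 argu0 r20 argv0 in
  let k2 := pd 2 Qp r10 argu0 r20 argv0 in
  let k3 := pd 3 Qp r10 argu0 r20 argv0 in
  let k4 := pd 4 Qp r10 argu0 r20 argv0 in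
  k1 <> 0 ->
  let Theta1 := (INR p + 1) / 2 * argu0 in
  let Theta2 := (INR p - 1) / 2 * argu0 + argmu in
  let Theta3 := (INR q + 1) / 2 * argv0 in
  let w0 := k1 * r10 + k2 * argu0 + k3 * r20 + k4 * argv0 in
  let Qn := newcoords k1 k2 k3 k4 Qp in
  let Rn := newcoords k1 k2 k3 k4 Rp in
  let s := pd 1 Rn w0 argu0 r20 argv0 in
  let Rhat : fun4 := fun a b c d => Rn a b c d - s * Qn a b c d in
  let phi := powerRZ (-1) kappa * (INR p - 1) * r20 * sin Theta3
             + (INR q - 1) * Cnorm mu * r10 * sin Theta1 in
  det3 (hess234 Rhat w0 argu0 r20 argv0)
  = - (4 * (INR p - 1) * (INR q - 1) * Cnorm mu ^ 2) / (k1 ^ 2 * cos Theta2) * phi.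
Proof.
pose proof (sing_uv _ _ _ _ _ hsing) as HUV. cbv zeta in HUV. destruct HUV as [HU HV].
assert (HQ : Qpol p q mu = Qf (Cnorm mu) argmu p q).
{ pose proof (Qpol_eq p q (Cnorm mu) argmu) as E. rewrite <- hargmu in E. exact E. }
assert (HR : Rpol p q mu = Rf (Cnorm mu) argmu p q).
{ pose proof (Rpol_eq p q (Cnorm mu) argmu) as E. rewrite <- hargmu in E. exact E. }
cbv zeta. rewrite HQ, HR. intro Hk1.
set (m := Cnorm mu) in *.
set (r1 := Cnorm u0) in *. set (r2 := Cnorm v0) in *.
assert (Hm0 : 0 <= m) by (unfold m, Cnorm; apply sqrt_pos).
assert (Hr10 : 0 <= r1) by (unfold r1, Cnorm; apply sqrt_pos).
assert (Hr20 : 0 <= r2) by (unfold r2, Cnorm; apply sqrt_pos).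
assert (Hm : m <> 0).
{ intro E. apply hmu. rewrite hargmu. unfold Cpolar. rewrite E. f_equal; ring. }
rewrite hargu0, polar_norm, hargmu, polar_norm0 in HU.
rewrite hargv0, polar_norm in HV.
assert (hp1 : (1 <= p)%nat) by lia. assert (hq1 : (1 <= q)%nat) by lia.
assert (hp2 : (1 <= pred p)%nat) by lia. assert (hq2 : (1 <= pred q)%nat) by lia.
assert (HP : 0 < INR p) by (apply lt_0_INR; lia).
assert (HQn : 0 < INR q) by (apply lt_0_INR; lia).
assert (hX : INR p * r1^(pred p) = 1).
{ assert (H0 : 0 <= INR p * r1^(pred p)) by (apply Rmult_le_pos; [lra| apply pow_le; lra]).
  assert (H1 : (INR p * r1^(pred p))^2 = 1).
  { apply (Rmult_eq_reg_r (m^2)); [| apply pow_nonzero; exact Hm].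
    replace ((INR p * r1 ^ Init.Nat.pred p) ^ 2 * m ^ 2) with (INR p ^ 2 * (r1 ^ Init.Nat.pred p) ^ 2 * m ^ 2) by ring.
    rewrite HU. ring. }
  nra. }
assert (hY : INR q * r2^(pred q) = 1).
{ assert (H0 : 0 <= INR q * r2^(pred q)) by (apply Rmult_le_pos; [lra| apply pow_le; lra]).
  assert (H1 : (INR q * r2^(pred q))^2 = 1).
  { rewrite <- HV. ring. }
  nra. }
assert (hXp : r1^p = r1 * r1^(pred p)) by (apply pow_pred; lia).
assert (hYp : r2^q = r2 * r2^(pred q)) by (apply pow_pred; lia).
assert (hXr : r1^(pred p) = r1 * r1^(pred (pred p))) by (apply pow_pred; lia).
assert (hYr : r2^(pred q) = r2 * r2^(pred (pred q))) by (apply pow_pred; lia).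
assert (hPm : INR (pred p) = INR p - 1) by (apply INR_pred; lia).
assert (hQm : INR (pred q) = INR q - 1) by (apply INR_pred; lia).
assert (Hr1 : r1 <> 0). { intro E. rewrite hXr, E in hX. lra. }
assert (Hr2 : r2 <> 0). { intro E. rewrite hYr, E in hY. lra. }
assert (hXi : r1^(pred p) = / INR p) by (rewrite <- (Rmult_1_l (/ INR p)), <- hX; field; lra).
assert (hYi : r2^(pred q) = / INR q) by (rewrite <- (Rmult_1_l (/ INR q)), <- hY; field; lra).
assert (hZ : r1^(pred (pred p)) = / (INR p * r1)).
{ rewrite hXr in hX. rewrite <- (Rmult_1_l (/ _)), <- hX. field. split; lra. }
assert (hW : r2^(pred (pred q)) = / (INR q * r2)).
{ rewrite hYr in hY. rewrite <- (Rmult_1_l (/ _)), <- hY. field. split; lra. }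
clear HU HV.
set (k1 := pd 1 (Qf m argmu p q) r1 argu0 r2 argv0) in *.
set (k2 := pd 2 (Qf m argmu p q) r1 argu0 r2 argv0) in *.
set (k3 := pd 3 (Qf m argmu p q) r1 argu0 r2 argv0) in *.
set (k4 := pd 4 (Qf m argmu p q) r1 argu0 r2 argv0) in *.
set (w0 := k1 * r1 + k2 * argu0 + k3 * r2 + k4 * argv0).
set (s := pd 1 (newcoords k1 k2 k3 k4 (Rf m argmu p q)) w0 argu0 r2 argv0).
Ltac eqR := match goal with |- ?x = ?y => change (@eq R x y) end.
assert (hk1 : k1 = Q1f m argmu p r1 argu0 r2 argv0).
{ unfold k1, pd. cbv beta iota. apply Deriv_is. unfold Qf. auto_derive; [auto|]. eqR. unfold Q1f, Rminus. ring. }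
assert (hk2 : k2 = Q2f m argmu p r1 argu0 r2 argv0).
{ unfold k2, pd. cbv beta iota. apply Deriv_is. unfold Qf. auto_derive; [auto|]. eqR. unfold Q2f, Rminus. ring. }
assert (hk3 : k3 = Q3f q r1 argu0 r2 argv0).
{ unfold k3, pd. cbv beta iota. apply Deriv_is. unfold Qf. auto_derive; [auto|]. eqR. unfold Q3f, Rminus. ring. }
assert (hk4 : k4 = Q4f q r1 argu0 r2 argv0).
{ unfold k4, pd. cbv beta iota. apply Deriv_is. unfold Qf. auto_derive; [auto|]. eqR. unfold Q4f, Rminus. ring. }
assert (hs : s = / k1 * R1f m argmu p r1 argu0 r2 argv0).
{ unfold s. rewrite D1R. replace (Lf k1 k2 k3 k4 w0 argu0 r2 argv0) with r1. reflexivity.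
  unfold Lf, w0. field. exact Hk1. }
assert (HL : (w0 + - (k2 * argu0) + - (k3 * r2) + - (k4 * argv0)) * / k1 = r1).
{ unfold w0. field. exact Hk1. }
clearbody s w0 k1 k2 k3 k4.
unfold det3. change (fun a b c d : R => newcoords k1 k2 k3 k4 (Rf m argmu p q) a b c d - s * newcoords k1 k2 k3 k4 (Qf m argmu p q) a b c d) with (Rhat' m argmu p q k1 k2 k3 k4 s).
rewrite (H00 m argmu p q k1 k2 k3 k4 s w0 r1 argu0 r2 argv0 HL).
rewrite (H01 m argmu p q k1 k2 k3 k4 s w0 r1 argu0 r2 argv0 HL).
rewrite (H02 m argmu p q k1 k2 k3 k4 s w0 r1 argu0 r2 argv0 HL).
rewrite (H10 m argmu p q k1 k2 k3 k4 s w0 r1 argu0 r2 argv0 HL).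
rewrite (H11 m argmu p q k1 k2 k3 k4 s w0 r1 argu0 r2 argv0 HL).
rewrite (H12 m argmu p q k1 k2 k3 k4 s w0 r1 argu0 r2 argv0 HL).
rewrite (H20 m argmu p q k1 k2 k3 k4 s w0 r1 argu0 r2 argv0 HL).
rewrite (H21 m argmu p q k1 k2 k3 k4 s w0 r1 argu0 r2 argv0 HL).
rewrite (H22 m argmu p q k1 k2 k3 k4 s w0 r1 argu0 r2 argv0 HL).
set (g11 := G s (R11f m argmu p) (Q11f m argmu p) r1 argu0 r2 argv0).
set (g12 := G s (R12f m argmu p) (Q12f m argmu p) r1 argu0 r2 argv0).
set (g22 := G s (R22f m argmu p) (Q22f m argmu p) r1 argu0 r2 argv0).
set (g33 := G s (R33f q) (Q33f q) r1 argu0 r2 argv0).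
set (g34 := G s (R34f q) (Q34f q) r1 argu0 r2 argv0).
set (g44 := G s (R44f q) (Q44f q) r1 argu0 r2 argv0).
set (T1 := (INR p + 1) / 2 * argu0) in *.
set (T2 := (INR p - 1) / 2 * argu0 + argmu) in *.
set (T3 := (INR q + 1) / 2 * argv0) in *.
set (e := powerRZ (-1) kappa).
transitivity ((g22 - 2*(k2/k1)*g12 + (k2/k1)^2*g11)*(g33*g44 - g34^2)
  + (g22*g11 - g12^2)*((k3/k1)^2*g44 - 2*(k3/k1)*(k4/k1)*g34 + (k4/k1)^2*g33)).
{ ring. }
assert (hA : INR p * argu0 + argmu = T1 + T2) by (unfold T1, T2; field).
assert (hB : argmu - argu0 = T2 - T1) by (unfold T1, T2; field).
assert (hC : INR q * argv0 = (T3 + T2) - IZR kappa * PI) by (rewrite hkappa; unfold T3; field).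
assert (hD : argv0 = (T3 - T2) + IZR kappa * PI) by (rewrite hkappa; unfold T3; field).
assert (he : e^2 = 1).
{ destruct (cs_Z kappa 0) as [E1 E2]. rewrite Rplus_0_l, cos_0, sin_0 in *.
  pose proof (cs1 (IZR kappa * PI)) as E. rewrite E1, E2 in E. unfold e. lra. }
assert (cp : forall x, cos (x + IZR kappa * PI) = e * cos x) by (intro x; exact (proj1 (cs_Z kappa x))).
assert (sp : forall x, sin (x + IZR kappa * PI) = e * sin x) by (intro x; exact (proj2 (cs_Z kappa x))).
assert (cm : forall x, cos (x - IZR kappa * PI) = e * cos x).
{ intro x. pose proof (cp (x - IZR kappa * PI)) as E. replace (x - IZR kappa * PI + IZR kappa * PI) with x in E by ring.
  rewrite E. replace (e * (e * cos (x - IZR kappa * PI))) with (e^2 * cos (x - IZR kappa * PI)) by ring. rewrite he. ring. }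
assert (sm : forall x, sin (x - IZR kappa * PI) = e * sin x).
{ intro x. pose proof (sp (x - IZR kappa * PI)) as E. replace (x - IZR kappa * PI + IZR kappa * PI) with x in E by ring.
  rewrite E. replace (e * (e * sin (x - IZR kappa * PI))) with (e^2 * sin (x - IZR kappa * PI)) by ring. rewrite he. ring. }
assert (hk1s : k1 = 2*m*cos T1*cos T2).
{ rewrite hk1. unfold Q1f. rewrite hX, hA, hB, cos_plus, cos_minus. ring. }
assert (Hc1 : cos T1 <> 0). { intro E. apply Hk1. rewrite hk1s, E. ring. }
assert (Hc2 : cos T2 <> 0). { intro E. apply Hk1. rewrite hk1s, E. ring. }
assert (HPn : INR p <> 0) by lra. assert (HQnn : INR q <> 0) by lra.
assert (hss : s = sin T2 / cos T2).
{ rewrite hs, hk1s. unfold R1f. rewrite hX, hA, hB, sin_plus, sin_minus. field. repeat split; auto. }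
assert (hk2s : k2 = -2*m*r1*sin T1*cos T2).
{ rewrite hk2. unfold Q2f. rewrite hXp, hXi, hA, hB, sin_plus, sin_minus. field. auto. }
assert (hk3s : k3 = 2*e*cos T3*cos T2).
{ rewrite hk3. unfold Q3f. rewrite hYi, hC, hD, cm, cp, cos_plus, cos_minus. field. auto. }
assert (hk4s : k4 = -2*e*r2*sin T3*cos T2).
{ rewrite hk4. unfold Q4f. rewrite hYp, hYi, hC, hD, sm, sp, sin_plus, sin_minus. field. auto. }
Ltac fs := field; repeat split; auto.
assert (hg11 : g11 = m*(INR p - 1)*sin T1/(r1*cos T2)).
{ unfold g11, G, R11f, Q11f. rewrite hPm, hZ, hA, hss, sin_plus, cos_plus.
  transitivity (m*(INR p - 1)*sin T1*(cos T2^2 + sin T2^2)/(r1*cos T2)); [fs|]. rewrite cs1. fs. }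
assert (hg12 : g12 = m*(INR p - 1)*cos T1/cos T2).
{ unfold g12, G, R12f, Q12f. rewrite hXi, hA, hB, hss, sin_plus, cos_plus, sin_minus, cos_minus.
  transitivity (m*(INR p - 1)*cos T1*(cos T2^2 + sin T2^2)/cos T2); [fs|]. rewrite cs1. fs. }
assert (hg22 : g22 = -m*(INR p - 1)*r1*sin T1/cos T2).
{ unfold g22, G, R22f, Q22f. rewrite hXp, hXi, hA, hB, hss, sin_plus, cos_plus, sin_minus, cos_minus.
  transitivity (-m*(INR p - 1)*r1*sin T1*(cos T2^2 + sin T2^2)/cos T2); [fs|]. rewrite cs1. fs. }
assert (hg33 : g33 = e*(INR q - 1)*sin T3/(r2*cos T2)).
{ unfold g33, G, R33f, Q33f. rewrite hQm, hW, hC, sm, cm, hss, sin_plus, cos_plus.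
  transitivity (e*(INR q - 1)*sin T3*(cos T2^2 + sin T2^2)/(r2*cos T2)); [fs|]. rewrite cs1. fs. }
assert (hg34 : g34 = e*(INR q - 1)*cos T3/cos T2).
{ unfold g34, G, R34f, Q34f. rewrite hYi, hC, hD, sm, cm, sp, cp, hss, sin_plus, cos_plus, sin_minus, cos_minus.
  transitivity (e*(INR q - 1)*cos T3*(cos T2^2 + sin T2^2)/cos T2); [fs|]. rewrite cs1. fs. }
assert (hg44 : g44 = -e*(INR q - 1)*r2*sin T3/cos T2).
{ unfold g44, G, R44f, Q44f. rewrite hYp, hYi, hC, hD, sm, cm, sp, cp, hss, sin_plus, cos_plus, sin_minus, cos_minus.
  transitivity (-e*(INR q - 1)*r2*sin T3*(cos T2^2 + sin T2^2)/cos T2); [fs|]. rewrite cs1. fs. }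
assert (A1 : g22 - 2*(k2/k1)*g12 + (k2/k1)^2*g11 = m*(INR p - 1)*r1*sin T1/(cos T1^2*cos T2)).
{ rewrite hg11, hg12, hg22, hk1s, hk2s.
  transitivity (m*(INR p - 1)*r1*sin T1*(cos T1^2 + sin T1^2)/(cos T1^2*cos T2)); [fs|]. rewrite cs1. fs. }
assert (A2 : g33*g44 - g34^2 = -(INR q - 1)^2/cos T2^2).
{ rewrite hg33, hg34, hg44.
  transitivity (-e^2*(INR q - 1)^2*(cos T3^2 + sin T3^2)/cos T2^2); [fs|]. rewrite cs1, he. fs. }
assert (A3 : g22*g11 - g12^2 = -m^2*(INR p - 1)^2/cos T2^2).
{ rewrite hg11, hg12, hg22.
  transitivity (-m^2*(INR p - 1)^2*(cos T1^2 + sin T1^2)/cos T2^2); [fs|]. rewrite cs1. fs. }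
assert (A4 : (k3/k1)^2*g44 - 2*(k3/k1)*(k4/k1)*g34 + (k4/k1)^2*g33 = e*(INR q - 1)*r2*sin T3/(m^2*cos T1^2*cos T2)).
{ rewrite hg33, hg34, hg44, hk1s, hk3s, hk4s.
  transitivity (e*e^2*(INR q - 1)*r2*sin T3*(cos T3^2 + sin T3^2)/(m^2*cos T1^2*cos T2)); [fs|]. rewrite cs1, he. fs. }
rewrite A1, A2, A3, A4, hk1s. fs.
Qed.
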